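(* Fix $\bar x\ge0$ and let $Y=(Y_t)_{t\ge0}$ be a measurable real-valued path with $Y_0\le\bar x$ such that $\overline Y$ (its running supremum with initial maximum level $\bar x$) is continuous. Let $H=(H_t)_{t\ge0}$ be a measurable path with $H_t\le1$ for all $t\ge0$ (and such that the integrals below are well defined). Define $U_t=Y_t-\int_{0^+}^tH_s\,\mathrm d\overline Y_s$. Then the running supremum of $U$ with initial maximum level $\bar x$ satisfies $$\overline U_t=\overline Y_t-\int_{0^+}^tH_s\,\mathrm d\overline Y_s,\qquad t\ge0.$$
   Context: For a path $Y$ and $\bar x\ge Y_0$, $\overline Y_t:=\bar x\vee\sup_{0\le s\le t}Y_s$. $\int_{0^+}^t$ denotes the Stieltjes integral over $(0,t]$. *)

(* Defs.v *)
From HB Require Import structures.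
From mathcomp Require Import all_boot all_order all_algebra.
From mathcomp Require Import all_classical all_reals all_analysis.
Set Implicit Arguments. Unset Strict Implicit. Unset Printing Implicit Defensive.
Import Order.TTheory GRing.Theory Num.Theory.
Import numFieldNormedType.Exports.
Local Open Scope classical_set_scope.
Local Open Scope ring_scope.

Definition runmax (R : realType) (xbar : R) (Y : R -> R) (t : R) : \bar R :=
  maxe xbar%:E (ereal_sup [set (Y s)%:E | s in `[0, t]%classic]).

(* Lebesgue-Stieltjes measure dF of a function F : R -> R; it is the library's
   [lebesgue_stieltjes_measure] when F is nondecreasing and right-continuous
   (the only case in which it is used), and the zero measure otherwise. *)
Definition stieltjes_measure (R : realType) (F : R -> R)
  : set (measurableTypeR R) -> \bar R :=
  match pselect (nondecreasing F /\ (forall x : R, F%function @ at_right x --> F x)) with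
  | left P => lebesgue_stieltjes_measure
      (HB.pack_for (cumulative R R) F
         (isCumulative.Build R _ R F (proj1 P) (proj2 P)))
  | right _ => @mzero _ (measurableTypeR R) R
  end.

Definition stieltjes_int (R : realType) (F H : R -> R) (t : R) : \bar R :=
  (\int[stieltjes_measure F]_(s in `]0%R, t]%classic) (H s)%:E)%E.

(* Main.v *)
Require Import Defs.
From HB Require Import structures.
From mathcomp Require Import all_boot all_order all_algebra.
From mathcomp Require Import all_classical all_reals all_analysis.
From mathcomp Require Import ring lra.
Import Order.TTheory GRing.Theory Num.Theory.
Import numFieldNormedType.Exports.
Local Open Scope classical_set_scope.
Local Open Scope ring_scope.
Local Open Scope ereal_scope.

Lemma core_pieces (R : realType) (mu : {measure set (measurableTypeR R) -> \bar R})
  (t : R) (H F : R -> R) :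
  (0 <= t)%R ->
  (forall a b, (a <= b)%R -> mu `]a,b]%classic = (F b - F a)%:E) ->
  (forall s, (0 <= s)%R -> (H s <= 1)%R) ->
  mu.-integrable `]0%R,t]%classic (fun s => (H s)%:E) ->
  let iH := fun a b => fine (\int[mu]_(x in `]a,b]%classic) (H x)%:E) in
  (forall a b, (0 <= a)%R -> (a <= b)%R -> (b <= t)%R ->
     \int[mu]_(x in `]a,b]%classic) (H x)%:E = (iH a b)%:E) /\
  (forall s, (0 <= s)%R -> (s <= t)%R -> iH 0%R t = (iH 0%R s + iH s t)%R) /\
  (forall s, (0 <= s)%R -> (s <= t)%R -> (iH s t <= F t - F s)%R) /\
  (forall e, (0 < e)%R -> exists d, (0 < d)%R /\ forall s, (0 <= s)%R -> (s <= t)%R ->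
     (F t - F s < d)%R -> (- e <= iH s t)%R).
Proof.
move=> t0 hmu hH hint iH.
have mI : forall a b : R, measurable (`]a,b]%classic : set (measurableTypeR R)).
  by move=> a b; exact: measurable_itv.
have intS : forall a b, (0 <= a)%R -> (b <= t)%R ->
    mu.-integrable `]a,b]%classic (fun s => (H s)%:E).
  move=> a b a0 bt; apply: integrableS hint => //.
  move=> x /=; rewrite !in_itv /= => /andP[ax xb].
  apply/andP; split; first exact: le_lt_trans ax.
  exact: le_trans bt.
have IE : forall a b, (0 <= a)%R -> (a <= b)%R -> (b <= t)%R ->
     \int[mu]_(x in `]a,b]%classic) (H x)%:E = (iH a b)%:E.
  move=> a b a0 ab bt; rewrite /iH fineK//.
  exact: integrable_fin_num (intS a b a0 bt).
split => //.
have Hsplit : forall s, (0 <= s)%R -> (s <= t)%R -> iH 0%R t = (iH 0%R s + iH s t)%R.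
  move=> s s0 st.
  have : \int[mu]_(x in `]0%R,t]%classic) (H x)%:E =
     \int[mu]_(x in `]0%R,s]%classic) (H x)%:E + \int[mu]_(x in `]s,t]%classic) (H x)%:E.
    rewrite (@itv_bndbnd_setU _ _ (BRight 0%R) (BRight s) (BRight t)); last 2 first.
    - by rewrite bnd_simp.
    - by rewrite bnd_simp.
    apply: integral_setU => //.
    + rewrite -(@itv_bndbnd_setU _ _ (BRight 0%R) (BRight s) (BRight t)); last 2 first.
      - by rewrite bnd_simp.
      - by rewrite bnd_simp.
      by case/integrableP : hint.
    + apply/eqP/seteqP; split => x //=; rewrite !in_itv/= => -[/andP[_ xs] /andP[sx _]].
      by move: (lt_le_trans sx xs); rewrite ltxx.
  rewrite IE // IE // IE // => /eqP; rewrite -EFinD eqe => /eqP.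
  done.
split => //.
split.
  move=> s s0 st.
  have : \int[mu]_(x in `]s,t]%classic) (H x)%:E <= \int[mu]_(x in `]s,t]%classic) (cst 1%E x).
    apply: le_integral => //.
    - exact: intS.
    - apply/integrableP; split; first exact: measurable_cst.
      rewrite (eq_integral (fun _ => 1%E)); last by move=> x _ /=; rewrite normr1.
      by rewrite integral_cst// mul1e hmu// ltry.
    - move=> x; rewrite inE /= in_itv/= => /andP[sx _]; rewrite lee_fin; apply: hH.
      exact: le_trans (ltW sx).
  by rewrite IE// integral_cst// mul1e hmu// lee_fin.
move=> e e0.
pose f := fun x => if x \in `]0%R, t]%classic then H x else 0%R.
have intf : mu.-integrable setT (EFin \o f).
  have := hint; rewrite (integrable_mkcond _ (mI _ _)).
  apply: eq_integrable => //= x _.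
  by rewrite /f /patch; case: ifP.
have [d [d0 hd]] := integral_normr_continuous intf e0.
exists d; split => // s s0 st hs.
have sub : `]s, t]%classic `<=` `]0%R, t]%classic.
  move=> x /=; rewrite !in_itv /= => /andP[sx xt].
  by rewrite xt andbT; exact: le_lt_trans sx.
have := hd _ (mI s t); rewrite hmu// lte_fin => /(_ hs).
have intA : mu.-integrable `]s,t]%classic (EFin \o f).
  exact: integrableS intf.
rewrite /Rintegral.
have -> : \int[mu]_(x in `]s, t]%classic) (`|f x|)%:E = \int[mu]_(x in `]s, t]%classic) `|(H x)%:E|.
  apply: eq_integral => x; rewrite inE => /sub xt.
  by rewrite /f; move/mem_set : xt => ->.
have hle := le_abse_integral mu (mI s t) (measurable_int _ (intS s t s0 (lexx t))).
rewrite IE// in hle.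
have fa : \int[mu]_(x in `]s, t]%classic) `|(H x)%:E| \is a fin_num.
  exact: integrable_fin_num (integrable_abse (intS s t s0 (lexx t))).
rewrite -(fineK fa) lee_fin in hle => lt.
have := le_lt_trans hle lt; rewrite ltr_norml => /andP[+ _].
exact: ltW.
Qed.

Lemma core (R : realType) (mu : {measure set (measurableTypeR R) -> \bar R})
  (xbar t : R) (Y H F : R -> R) :
  (0 <= t)%R ->
  (forall s, (0 <= s)%R -> runmax xbar Y s = (F s)%:E) ->
  F 0%R = xbar ->
  (forall a b, (a <= b)%R -> mu `]a,b]%classic = (F b - F a)%:E) ->
  (forall s, (0 <= s)%R -> (H s <= 1)%R) ->
  mu.-integrable `]0%R,t]%classic (fun s => (H s)%:E) ->
  runmax xbar (fun s => (Y s - fine (\int[mu]_(x in `]0%R,s]%classic) (H x)%:E))%R) t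
  = (F t)%:E - \int[mu]_(x in `]0%R,t]%classic) (H x)%:E.
Proof.
move=> t0 hF hF0 hmu hH hint.
have /= [IE [Hsplit [Hle Habs]]] := @core_pieces R mu t H F t0 hmu hH hint.
set iH := fun a b => fine (\int[mu]_(x in `]a,b]%classic) (H x)%:E).
have IE' : forall a b, (0 <= a)%R -> (a <= b)%R -> (b <= t)%R ->
     \int[mu]_(x in `]a,b]%classic) (H x)%:E = (iH a b)%:E by exact: IE.
have Hsplit' : forall s, (0 <= s)%R -> (s <= t)%R -> iH 0%R t = (iH 0%R s + iH s t)%R by exact: Hsplit.
have Hle' : forall s, (0 <= s)%R -> (s <= t)%R -> (iH s t <= F t - F s)%R by exact: Hle.
have Habs' : forall e, (0 < e)%R -> exists d, (0 < d)%R /\ forall s, (0 <= s)%R -> (s <= t)%R ->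
     (F t - F s < d)%R -> (- e <= iH s t)%R by exact: Habs.
clear IE Hsplit Hle Habs.
rewrite (_ : (fun s => (Y s - fine (\int[mu]_(x in `]0%R,s]%classic) (H x)%:E))%R)
   = (fun s => (Y s - iH 0%R s))%R) //.
have hYF : forall s, (0 <= s)%R -> (Y s <= F s)%R.
  move=> s s0; rewrite -lee_fin -hF // /runmax le_max; apply/orP; right.
  by apply: ereal_sup_ubound; exists s => //=; rewrite in_itv /= s0 lexx.
have hxF : forall s, (0 <= s)%R -> (xbar <= F s)%R.
  by move=> s s0; rewrite -lee_fin -hF // /runmax le_max lexx.
rewrite IE' // -EFinB.
apply/eqP; rewrite eq_le; apply/andP; split.
  rewrite /runmax ge_max; apply/andP; split.
    have := Hle' 0%R (lexx _) t0; rewrite hF0 lee_fin => h; lra.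
  apply: ge_ereal_sup => _ [s /= hs <-]; move: hs; rewrite in_itv /= => /andP[s0 st].
  have := Hle' s s0 st; have := Hsplit' s s0 st; have := hYF s s0.
  rewrite lee_fin; lra.
apply/lee_addgt0Pr => e e0.
have e20 : (0 < e / 2)%R by rewrite divr_gt0.
have [d [d0 hd]] := Habs' (e / 2)%R e20.
pose m := Num.min d (e / 2)%R.
have m0 : (0 < m)%R by rewrite lt_min d0 e20.
have md : (m <= d)%R by rewrite ge_min lexx.
have me : (m <= e / 2)%R by rewrite ge_min lexx orbT.
have hU : forall s, (0 <= s)%R -> (s <= t)%R ->
   ((Y s - iH 0%R s)%:E <= runmax xbar (fun s => (Y s - iH 0%R s))%R t).
  move=> s s0 st; rewrite /runmax le_max; apply/orP; right.
  by apply: ereal_sup_ubound; exists s => //=; rewrite in_itv /= s0 st.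
case: (pselect (exists s, [/\ (0 <= s)%R, (s <= t)%R & (F t - m < Y s)%R])).
  move=> [s [s0 st hYs]].
  apply: le_trans (leeD2r _ (hU s s0 st)).
  have := hd s s0 st; have := Hsplit' s s0 st; have := hYF s s0.
  rewrite -EFinD lee_fin => h1 h2 h3.
  have h4 : (- (e / 2) <= iH s t)%R by apply: h3; lra.
  lra.
move=> nex.
have hY : forall s, (0 <= s)%R -> (s <= t)%R -> (Y s <= F t - m)%R.
  move=> s s0 st; rewrite leNgt; apply/negP => h; apply: nex; exists s; split => //.
have hFt : (F t <= xbar)%R.
  have : ((F t)%:E <= maxe xbar%:E (F t - m)%:E).
    rewrite -hF // /runmax ge_max le_max lexx /= le_max; apply/orP; right.
    apply: ge_ereal_sup => _ [s /= hs <-]; move: hs; rewrite in_itv /= => /andP[s0 st].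
    by rewrite lee_fin hY.
  rewrite le_max !lee_fin => /orP[//|h]; lra.
have hxt := hxF t t0.
have hFF : (F t - F 0 < d)%R by rewrite hF0; lra.
have h4 := hd 0%R (lexx _) t0 hFF.
have h5 : (xbar%:E <= runmax xbar (fun s => (Y s - iH 0%R s))%R t) by rewrite /runmax le_max lexx.
apply: le_trans (leeD2r _ h5).
have : iH 0%R 0%R = 0%R.
  by rewrite /iH set_itvxx integral_set0.
rewrite -EFinD lee_fin; lra.
Qed.
Lemma stieltjes_ex (R : realType) (F : R -> R) :
  nondecreasing F -> (forall x : R, F%function @ at_right x --> F x) ->
  exists mu : {measure set (measurableTypeR R) -> \bar R},
    stieltjes_measure F = mu /\
    forall a b : R, (a <= b)%R -> mu `]a, b]%classic = (F b - F a)%:E.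
Proof.
move=> ndF rcF; rewrite /stieltjes_measure; case: pselect => [P|[]//].
eexists; split; first reflexivity.
move=> a b ab.
rewrite /=. rewrite /lebesgue_stieltjes_measure. rewrite /measure_extension. rewrite measurable_mu_extE//; last exact: is_ocitv.
exact: wlength_itv_bnd.
Qed.
Local Close Scope ereal_scope.

Theorem lemma3p1 (R : realType) (xbar : R) (Y H : R -> R) :
  0 <= xbar ->
  measurable_fun (`[0, +oo[%classic : set R) Y ->
  Y 0 <= xbar ->
  (forall t, 0 <= t -> runmax xbar Y t \is a fin_num) ->
  {within `[0, +oo[%classic, continuous (fun t => fine (runmax xbar Y t))} ->
  measurable_fun (`[0, +oo[%classic : set R) H ->
  (forall t, 0 <= t -> H t <= 1) ->
  (forall t, 0 <= t ->
     (stieltjes_measure (fun s => fine (runmax xbar Y s))).-integrable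
       `]0, t]%classic (fun s => (H s)%:E)) ->
  let Ybar := fun t => fine (runmax xbar Y t) in
  let U := fun t => Y t - fine (stieltjes_int Ybar H t) in
  forall t, 0 <= t ->
    runmax xbar U t = ((Ybar t)%:E - stieltjes_int Ybar H t)%E.
Proof.
move=> x0 mY Y0 hfin hcont mH hH1 hint Ybar U t t0.
have hF : forall s, 0 <= s -> runmax xbar Y s = (Ybar s)%:E.
  by move=> s s0; rewrite /Ybar fineK // hfin.
have hneg : forall s, s < 0 -> runmax xbar Y s = xbar%:E.
  move=> s s0; rewrite /runmax (_ : [set (Y u)%:E | u in `[0, s]%classic] = set0) ?ereal_sup0 ?maxeNy //.
  apply/seteqP; split => // y [u /=]; rewrite in_itv /= => /andP[u0 us]; exfalso; lra.
have Ybarneg : forall s, s < 0 -> Ybar s = xbar by move=> s s0; rewrite /Ybar hneg.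
have hxY : forall s, xbar <= Ybar s.
  move=> s; case: (ltP s 0) => s0; first by rewrite Ybarneg.
  by rewrite -lee_fin -hF // /runmax le_max lexx.
have hmono : forall a b, 0 <= a -> a <= b -> (runmax xbar Y a <= runmax xbar Y b)%E.
  move=> a b a0 ab; rewrite /runmax ge_max le_max lexx /= le_max; apply/orP; right.
  apply: ge_ereal_sup => _ [u /= hu <-].
  apply: ereal_sup_ubound; exists u => //=; move: hu; rewrite !in_itv /= => /andP[-> ub] /=.
  exact: le_trans ab.
have nd : nondecreasing Ybar.
  move=> a b ab; case: (ltP a 0) => a0; first by rewrite Ybarneg.
  by rewrite -lee_fin -hF // -hF //; [exact: hmono | exact: le_trans ab].
have Y0x : Ybar 0 = xbar.
  apply/eqP; rewrite eq_le hxY andbT -lee_fin -hF // /runmax ge_max lexx /=.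
  apply: ge_ereal_sup => _ [u /= hu <-]; move: hu; rewrite in_itv /= => /andP[u0 u0'].
  have -> : u = 0 by apply/eqP; rewrite eq_le u0 u0'.
  by rewrite lee_fin.
have rc : forall x, Ybar @ at_right x --> Ybar x.
  move=> x; case: (ltP x 0) => x0'.
    rewrite Ybarneg //.
    have : {near x^'+, cst xbar =1 Ybar}.
      by apply: filterS (nbhs_right_lt x0') => y /= y0; rewrite Ybarneg.
    move/near_eq_cvg => h; apply: cvg_trans h _; exact: cvg_cst.
  move/continuous_within_itvcyP : hcont => [hin h0].
  case: (eqVneq x 0) => [->|xn0]; first exact: h0.
  apply: cvg_at_right_filter; apply: hin.
  by rewrite in_itv /= andbT lt_neqAle eq_sym xn0 x0'.
have [mu [Emu hmu]] := @stieltjes_ex R Ybar nd rc.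
have hint' := hint t t0.
rewrite -/Ybar Emu in hint'.
rewrite /U /stieltjes_int Emu.
exact: (@core R mu xbar t Y H Ybar t0 hF Y0x hmu hH1 hint').
Qed.
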